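(* Let $m,n\geq 2$. There does not exist a Borel-Turing computable function $G:\mathbb{C}^{m\times n}\to\mathbb{C}^{n\times m}$ such that, setting $A_0=G(A)$ and $A_k=2A_{k-1}-A_{k-1}AA_{k-1}$ for $k\in\mathbb{N}$, the sequence $(A_k)_{k}$ converges effectively to $A^\dagger$, i.e., such that there exists a recursive function $e:\mathbb{N}\to\mathbb{N}$ with $\|A^\dagger-A_k\|_2\le 2^{-N}$ for every (computable) $A\in\mathbb{C}^{m\times n}$, every $N\in\mathbb{N}$ and every $k\ge e(N)$.
   Context: $A^\dagger\in\mathbb{C}^{n\times m}$ is the Moore–Penrose pseudoinverse of $A\in\mathbb{C}^{m\times n}$ (the unique matrix with $AA^\dagger A=A$, $A^\dagger AA^\dagger=A^\dagger$, $(AA^\dagger)^H=AA^\dagger$, $(A^\dagger A)^H=A^\dagger A$); $\|\cdot\|_2$ is the spectral norm. A real number $x$ is computable if there is a sequence $r_k=(-1)^{s(k)}a(k)/b(k)$ with recursive $a,b,s$, $b(k)\ne0$, such that $|r_k-x|\le2^{-k}$ for all $k$; such a sequence is a representation of $x$. Complex numbers/matrices are computable if the real and imaginary parts of all entries are; a representation of such an object consists of representations of these parts. A function $G$ defined on computable inputs with computable outputs is Borel-Turing computable if there is a Turing machine that transforms each representation of any input $x$ into a representation of $G(x)$. *)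

(* Defs.v *)
From HB Require Import structures.
From mathcomp Require Import all_boot all_order all_algebra.
From mathcomp Require Import boolp classical_sets reals.
From mathcomp Require Import complex.
Set Implicit Arguments. Unset Strict Implicit. Unset Printing Implicit Defensive.
Import Order.TTheory GRing.Theory Num.Theory.
Local Open Scope ring_scope.

(* Model of computation: (partial) mu-recursive functions with an oracle.    *)
(* The oracle o t c k is queried by the instruction Orc on the first three   *)
(* arguments; it gives the machine read access to an input representation   *)
(* (component c in {0,1,2} = (a,b,s) of real number number t, at index k).   *)
Inductive prog : Type :=
| Zero
| Succ
| Proj of nat
| Orc
| Comp of prog & list prog
| Prim of prog & prog
| Mu of prog.

Inductive eval (o : nat -> nat -> nat -> nat) : prog -> seq nat -> nat -> Prop :=
| ev_zero xs : eval o Zero xs 0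
| ev_succ x xs : eval o Succ (x :: xs) x.+1
| ev_proj i xs : eval o (Proj i) xs (nth 0%N xs i)
| ev_orc t c k xs : eval o Orc [:: t, c, k & xs] (o t c k)
| ev_comp f gs xs ys y :
    evals o gs xs ys -> eval o f ys y -> eval o (Comp f gs) xs y
| ev_prim0 f g xs y : eval o f xs y -> eval o (Prim f g) (0%N :: xs) y
| ev_primS f g n xs r y :
    eval o (Prim f g) (n :: xs) r -> eval o g [:: n, r & xs] y ->
    eval o (Prim f g) (n.+1 :: xs) y
| ev_mu f xs n :
    eval o f (n :: xs) 0 ->
    (forall i, (i < n)%N -> exists v, eval o f (i :: xs) v.+1) ->
    eval o (Mu f) xs n
with evals (o : nat -> nat -> nat -> nat) : list prog -> seq nat -> seq nat -> Prop :=
| evs_nil xs : evals o nil xs nil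
| evs_cons g gs xs y ys :
    eval o g xs y -> evals o gs xs ys -> evals o (g :: gs) xs (y :: ys).

Definition no_oracle : nat -> nat -> nat -> nat := fun _ _ _ => 0%N.

Definition recursive (f : nat -> nat) : Prop :=
  exists p : prog, forall x : nat, eval no_oracle p [:: x] (f x).

Definition rat_val {R : realType} (a b s : nat) : R :=
  (-1) ^+ s * a%:R / b%:R.

Definition real_rep {R : realType} (x : R) (a b s : nat -> nat) : Prop :=
  [/\ recursive a, recursive b, recursive s,
      (forall k, b k <> 0%N) &
      (forall k, `|rat_val (a k) (b k) (s k) - x| <= 2%:R ^- k)].

Definition computable_real {R : realType} (x : R) : Prop :=
  exists a b s, real_rep x a b s.

Definition re_idx (n i j : nat) : nat := (2 * (i * n + j))%N.
Definition im_idx (n i j : nat) : nat := (2 * (i * n + j)).+1%N.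

(* rho t c k: component c (0 = a, 1 = b, 2 = s) at index k of the representation
   of the t-th real number (t = re_idx / im_idx); unused slots are 0. *)
Definition mx_rep {R : realType} {m n : nat} (A : 'M[R[i]]_(m, n))
    (rho : nat -> nat -> nat -> nat) : Prop :=
  [/\ (forall (i : 'I_m) (j : 'I_n),
         real_rep (complex.Re (A i j)) (rho (re_idx n i j) 0%N) (rho (re_idx n i j) 1%N)
                                (rho (re_idx n i j) 2%N)),
      (forall (i : 'I_m) (j : 'I_n),
         real_rep (complex.Im (A i j)) (rho (im_idx n i j) 0%N) (rho (im_idx n i j) 1%N)
                                (rho (im_idx n i j) 2%N)) &
      (forall t c k, ((2 * (m * n) <= t)%N \/ (3 <= c)%N) -> rho t c k = 0%N)].

Definition computable_mx {R : realType} {m n : nat} (A : 'M[R[i]]_(m, n)) : Prop :=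
  exists rho, mx_rep A rho.

Definition BT_computable {R : realType} {m n p q : nat}
    (G : 'M[R[i]]_(m, n) -> 'M[R[i]]_(p, q)) : Prop :=
  exists P : prog, forall (A : 'M[R[i]]_(m, n)) rho, mx_rep A rho ->
    exists sigma : nat -> nat -> nat -> nat,
      (forall t c k, eval rho P [:: t; c; k] (sigma t c k)) /\ mx_rep (G A) sigma.

Definition cconj {R : realType} (z : R[i]) : R[i] := Complex (complex.Re z) (- complex.Im z).

Definition ctrmx {R : realType} {m n : nat} (A : 'M[R[i]]_(m, n)) : 'M[R[i]]_(n, m) :=
  map_mx cconj A^T.

Definition is_MP_pinv {R : realType} {m n : nat}
    (A : 'M[R[i]]_(m, n)) (X : 'M[R[i]]_(n, m)) : Prop :=
  [/\ A *m X *m A = A, X *m A *m X = X,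
      ctrmx (A *m X) = A *m X & ctrmx (X *m A) = X *m A].

Definition pinv {R : realType} {m n : nat} (A : 'M[R[i]]_(m, n)) : 'M[R[i]]_(n, m) :=
  xget 0 [set X | is_MP_pinv A X].

Definition vnorm2 {R : realType} {n : nat} (v : 'cV[R[i]]_n) : R :=
  Num.sqrt (\sum_(i < n) ((complex.Re (v i 0)) ^+ 2 + (complex.Im (v i 0)) ^+ 2)).

Definition specnorm {R : realType} {m n : nat} (M : 'M[R[i]]_(m, n)) : R :=
  sup [set vnorm2 (M *m v) | v in [set v : 'cV[R[i]]_n | vnorm2 v = 1]].

Fixpoint newton_iter {R : realType} {m n : nat} (A : 'M[R[i]]_(m, n))
    (X0 : 'M[R[i]]_(n, m)) (k : nat) : 'M[R[i]]_(n, m) :=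
  match k with
  | 0%N => X0
  | k'.+1 => let X := newton_iter A X0 k' in 2%:R *: X - X *m A *m X
  end.

(* Main.v *)
Require Import Defs.
From HB Require Import structures.
From mathcomp Require Import all_boot all_order all_algebra.
From mathcomp Require Import boolp classical_sets reals.
From mathcomp Require Import complex.
From mathcomp Require Import ring lra zify.
Import Order.TTheory GRing.Theory Num.Theory.
Local Open Scope ring_scope.
Local Close Scope ring_scope.
Section S.
Variable o : nat -> nat -> nat -> nat.
Variable P : prog -> seq nat -> nat -> Prop.
Variable Ps : list prog -> seq nat -> seq nat -> Prop.
Hypothesis hz : forall xs, P Zero xs 0.
Hypothesis hs : forall x xs, P Succ (x :: xs) x.+1.
Hypothesis hp : forall i xs, P (Proj i) xs (nth 0%N xs i).
Hypothesis ho : forall t c k xs, P Orc [:: t, c, k & xs] (o t c k).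
Hypothesis hc : forall f gs xs ys y, evals o gs xs ys -> Ps gs xs ys -> eval o f ys y -> P f ys y -> P (Comp f gs) xs y.
Hypothesis hp0 : forall f g xs y, eval o f xs y -> P f xs y -> P (Prim f g) (0%N :: xs) y.
Hypothesis hpS : forall f g n xs r y, eval o (Prim f g) (n :: xs) r -> P (Prim f g) (n :: xs) r ->
   eval o g [:: n, r & xs] y -> P g [:: n, r & xs] y -> P (Prim f g) (n.+1 :: xs) y.
Hypothesis hmu : forall f xs n, eval o f (n :: xs) 0 -> P f (n :: xs) 0 ->
    (forall i, (i < n)%N -> exists v, eval o f (i :: xs) v.+1 /\ P f (i :: xs) v.+1) ->
    P (Mu f) xs n.
Hypothesis hnil : forall xs, Ps nil xs nil.
Hypothesis hcons : forall g gs xs y ys, eval o g xs y -> P g xs y -> evals o gs xs ys -> Ps gs xs ys -> Ps (g :: gs) xs (y :: ys).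

Fixpoint ev_ind {p xs v} (H : eval o p xs v) {struct H} : P p xs v :=
  match H in eval _ p xs v return P p xs v with
  | ev_zero xs => hz xs
  | ev_succ x xs => hs x xs
  | ev_proj i xs => hp i xs
  | ev_orc t c k xs => ho t c k xs
  | ev_comp f gs xs ys y H1 H2 => @hc _ _ _ _ _ H1 (evs_ind H1) H2 (ev_ind H2)
  | ev_prim0 f g xs y H1 => @hp0 _ _ _ _ H1 (ev_ind H1)
  | ev_primS f g n xs r y H1 H2 => @hpS _ _ _ _ _ _ H1 (ev_ind H1) H2 (ev_ind H2)
  | ev_mu f xs n H1 H2 => @hmu _ _ _ H1 (ev_ind H1)
      (fun i hi => match H2 i hi with ex_intro v Hv => ex_intro _ v (conj Hv (ev_ind Hv)) end)
  end
with evs_ind {gs xs ys} (H : evals o gs xs ys) {struct H} : Ps gs xs ys :=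
  match H in evals _ gs xs ys return Ps gs xs ys with
  | evs_nil xs => hnil xs
  | evs_cons g gs xs y ys H1 H2 => @hcons _ _ _ _ _ H1 (ev_ind H1) H2 (evs_ind H2)
  end.
End S.

Arguments ev_ind o P Ps hz hs hp ho hc hp0 hpS hmu hnil hcons {p xs v}.

Lemma eval_det o p xs v : eval o p xs v -> forall v', eval o p xs v' -> v = v'.
Proof.
move: p xs v.
pose P p xs v := forall v', eval o p xs v' -> v = v'.
pose Ps gs xs ys := forall ys', evals o gs xs ys' -> ys = ys'.
  apply: (@ev_ind o P Ps); rewrite /P /Ps.
  - by move=> xs v' H; inversion H.
  - by move=> x xs v' H; inversion H.
  - by move=> i xs v' H; inversion H.
  - by move=> t c k xs v' H; inversion H.
  - move=> f gs xs ys y _ IHs _ IHf v' H; inversion H; subst.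
    match goal with Hs : evals _ _ _ _ |- _ => have E := IHs _ Hs end; subst.
    match goal with Hs : eval _ _ _ _ |- _ => exact: IHf _ Hs end.
  - move=> f g xs y _ IH v' H; inversion H; subst; exact: IH.
  - move=> f g n xs r y _ IH1 _ IH2 v' H; inversion H; subst.
    match goal with Hs : eval _ (Prim _ _) _ _ |- _ => have E := IH1 _ Hs end; subst.
    match goal with Hs : eval _ g _ _ |- _ => exact: IH2 _ Hs end.
  - move=> f xs n _ IH0 Hlt v' H; inversion H; subst.
    case: (ltngtP n v') => // [lt|lt].
    + match goal with Hs : forall i, _ -> exists _, _ |- _ => have [w Hw] := Hs _ lt end.
      by have := IH0 _ Hw.
    + have [w [Hw IHw]] := Hlt _ lt.
      match goal with Hs : eval _ f _ 0 |- _ => by have := IHw _ Hs end.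
  - by move=> xs ys' H; inversion H.
  - move=> g gs xs y ys _ IH1 _ IH2 ys' H; inversion H; subst.
    match goal with Hs : evals _ _ _ _ |- _ => rewrite (IH2 _ Hs) end.
    match goal with Hs : eval _ _ _ _ |- _ => by rewrite (IH1 _ Hs) end.
Qed.

Definition agree (o o' : nat -> nat -> nat -> nat) (K : nat) :=
  forall t c k, (t < K)%N -> (c < K)%N -> (k < K)%N -> o' t c k = o t c k.

Lemma agree_mono o o' K K' : (K <= K')%N -> agree o o' K' -> agree o o' K.
Proof.
move=> le H t c k ht hc hk; apply: H; exact: leq_trans le.
Qed.

Lemma fin_max n (Q : nat -> nat -> Prop) :
  (forall i K K', (K <= K')%N -> Q i K -> Q i K') ->
  (forall i, (i < n)%N -> exists K, Q i K) -> exists K, forall i, (i < n)%N -> Q i K.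
Proof.
move=> mono; elim: n => [|n IH] H; first by exists 0%N.
have [K1 H1] := IH (fun i hi => H i (ltnW hi)).
have [K2 H2] := H n (ltnSn n).
exists (maxn K1 K2) => i; rewrite ltnS leq_eqVlt => /orP[/eqP ->|hi].
  by apply: mono H2; rewrite leq_maxr.
by apply: mono (H1 i hi); rewrite leq_maxl.
Qed.

Lemma eval_local o p xs v : eval o p xs v ->
  exists K, forall o', agree o o' K -> eval o' p xs v.
Proof.
move: p xs v.
pose P p xs v := exists K, forall o', agree o o' K -> eval o' p xs v.
pose Ps gs xs ys := exists K, forall o', agree o o' K -> evals o' gs xs ys.
apply: (@ev_ind o P Ps); rewrite /P /Ps.
- by move=> xs; exists 0%N => o' _; constructor.
- by move=> x xs; exists 0%N => o' _; constructor.
- by move=> i xs; exists 0%N => o' _; constructor.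
- move=> t c k xs; exists (maxn t (maxn c k)).+1 => o' Ha.
  rewrite -Ha; first exact: ev_orc.
  + by rewrite ltnS leq_maxl.
  + by rewrite ltnS (leq_trans (leq_maxl c k)) // leq_maxr.
  + by rewrite ltnS (leq_trans (leq_maxr c k)) // leq_maxr.
- move=> f gs xs ys y _ [K1 H1] _ [K2 H2]; exists (maxn K1 K2) => o' Ha.
  apply: ev_comp; [apply: H1 | apply: H2]; apply: agree_mono Ha;
    [exact: leq_maxl | exact: leq_maxr].
- move=> f g xs y _ [K1 H1]; exists K1 => o' Ha; apply: ev_prim0; exact: H1.
- move=> f g n xs r y _ [K1 H1] _ [K2 H2]; exists (maxn K1 K2) => o' Ha.
  apply: ev_primS; [apply: H1 | apply: H2]; apply: agree_mono Ha;
    [exact: leq_maxl | exact: leq_maxr].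
- move=> f xs n _ [K1 H1] Hlt.
  have [K2 H2] : exists K, forall i, (i < n)%N ->
      exists w, forall o', agree o o' K -> eval o' f (i :: xs) w.+1.
    apply: fin_max.
      move=> i K K' le [w Hw]; exists w => o' Ha; apply: Hw; exact: agree_mono Ha.
    move=> i hi; have [w [_ [K Hw]]] := Hlt i hi; by exists K, w.
  exists (maxn K1 K2) => o' Ha; apply: ev_mu.
    apply: H1; apply: agree_mono Ha; exact: leq_maxl.
  move=> i hi; have [w Hw] := H2 i hi; exists w; apply: Hw.
  apply: agree_mono Ha; exact: leq_maxr.
- by move=> xs; exists 0%N => o' _; constructor.
- move=> g gs xs y ys _ [K1 H1] _ [K2 H2]; exists (maxn K1 K2) => o' Ha.
  apply: evs_cons; [apply: H1 | apply: H2]; apply: agree_mono Ha;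
    [exact: leq_maxl | exact: leq_maxr].
Qed.

Fixpoint cst (C : nat) : prog :=
  match C with 0%N => Zero | C'.+1 => Comp Succ [:: cst C'] end.

Lemma eval_cst o C xs : eval o (cst C) xs C.
Proof.
elim: C => [|C IH] /=; first exact: ev_zero.
apply: (@ev_comp _ _ _ _ [:: C]); first by apply: evs_cons => //; exact: evs_nil.
exact: ev_succ.
Qed.

Definition predP : prog := Prim Zero (Proj 0).

Lemma eval_predP o x : eval o predP [:: x] x.-1.
Proof.
elim: x => [|x IH]; first by apply: ev_prim0; exact: ev_zero.
apply: ev_primS; first exact: IH.
exact: (ev_proj o 0 [:: x; x.-1]).
Qed.

Definition cntP (M : nat) : prog := Prim (cst M) (Comp predP [:: Proj 1]).

Lemma eval_cntP o M k : eval o (cntP M) [:: k] (M - k).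
Proof.
elim: k => [|k IH]; first by rewrite subn0; apply: ev_prim0; exact: eval_cst.
apply: ev_primS; first exact: IH.
apply: (ev_comp (ys := [:: M - k])).
  by apply: evs_cons; [exact: (ev_proj o 1 [:: k; M - k]) | exact: evs_nil].
rewrite subnS; exact: eval_predP.
Qed.

Definition iszP : prog := Prim (cst 1) Zero.

Lemma eval_iszP o x : eval o iszP [:: x] (x == 0%N).
Proof.
elim: x => [|x IH]; first by apply: ev_prim0; exact: eval_cst.
apply: ev_primS; [exact: IH | exact: ev_zero].
Qed.

Definition indP (M : nat) : prog := Comp iszP [:: cntP M].

Lemma eval_indP o M k : eval o (indP M) [:: k] (M <= k).
Proof.
apply: (ev_comp (ys := [:: M - k])).
  by apply: evs_cons; [exact: eval_cntP | exact: evs_nil].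
by rewrite -subn_eq0; exact: eval_iszP.
Qed.

Definition selP (C : nat) : prog := Prim (cst 1) (cst C).

Lemma eval_selP o C (b : bool) : eval o (selP C) [:: nat_of_bool b] (if b then C else 1).
Proof.
case: b => /=; last by apply: ev_prim0; exact: eval_cst.
apply: (ev_primS (r := 1)); [apply: ev_prim0; exact: eval_cst | exact: eval_cst].
Qed.

Definition bP (M C : nat) : prog := Comp (selP C) [:: indP M].

Lemma eval_bP o M C k : eval o (bP M C) [:: k] (if M <= k then C else 1).
Proof.
apply: (ev_comp (ys := [:: nat_of_bool (M <= k)])).
  by apply: evs_cons; [exact: eval_indP | exact: evs_nil].
exact: eval_selP.
Qed.

Lemma rec_cst C : recursive (fun _ => C).
Proof. by exists (cst C) => x; exact: eval_cst. Qed.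

Lemma rec_ind M : recursive (fun k => nat_of_bool (M <= k)).
Proof. by exists (indP M) => x; exact: eval_indP. Qed.

Lemma rec_b M C : recursive (fun k => if M <= k then C else 1).
Proof. by exists (bP M C) => x; exact: eval_bP. Qed.

Local Open Scope ring_scope.
Local Open Scope complex_scope.
Lemma sum_if0 {T : nmodType} {p} (x : 'I_p.+1 -> T) :
  \sum_(l < p.+1) (if l == ord0 then x l else 0) = x ord0.
Proof. by rewrite -big_mkcond big_pred1_eq. Qed.

Section Mx.
Variable R : realType.
Local Notation C := (R[i]).
Local Notation nc := (@Normc.normc R).

Lemma mul_dr p q r (B : 'M[C]_(p, q.+1)) i (j : 'I_r.+1) :
  (B *m delta_mx ord0 ord0) i j = if j == ord0 then B i ord0 else 0.
Proof.
rewrite mxE; under eq_bigr => l _ do rewrite mxE.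
case: eqP => _; last by rewrite big1 // => l _; rewrite andbF mulr0.
rewrite -[RHS](sum_if0 (fun l => B i l)); apply: eq_bigr => l _.
by rewrite andbT mulr_natr mulrb.
Qed.

Lemma mul_dl p q r (B : 'M[C]_(q.+1, r)) (i : 'I_p.+1) j :
  (delta_mx ord0 ord0 *m B) i j = if i == ord0 then B ord0 j else 0.
Proof.
rewrite mxE; under eq_bigr => l _ do rewrite mxE.
case: eqP => _; last by rewrite big1 // => l _; rewrite mul0r.
rewrite -[RHS](sum_if0 (fun l => B l j)); apply: eq_bigr => l _.
by rewrite mulr_natl mulrb eq_sym.
Qed.

Lemma XAX00 p q (t : C) (X : 'M[C]_(q.+1, p.+1)) :
  (X *m (t *: delta_mx ord0 ord0) *m X) ord0 ord0 = X ord0 ord0 * t * X ord0 ord0.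
Proof.
rewrite -scalemxAr mxE.
rewrite (eq_bigr (fun j => if j == ord0 then t * X ord0 ord0 * X j ord0 else 0)).
  by rewrite sum_if0 (mulrC _ t).
by move=> j _; rewrite [X in X * _]mxE mul_dr; case: eqP => _; rewrite ?mulr0 ?mul0r.
Qed.

Lemma AXA00 p q (t : C) (X : 'M[C]_(q.+1, p.+1)) :
  ((t *: (delta_mx ord0 ord0 : 'M_(p.+1, q.+1))) *m X
     *m (t *: (delta_mx ord0 ord0 : 'M_(p.+1, q.+1)))) ord0 ord0
    = t * X ord0 ord0 * t :> C.
Proof.
rewrite -scalemxAr mxE mul_dr eqxx -scalemxAl mxE mul_dl eqxx.
by rewrite mulrC.
Qed.

Lemma newton_entry p q (t : C) (X0 : 'M[C]_(q.+1, p.+1)) k :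
  (newton_iter (t *: delta_mx ord0 ord0) X0 k.+1) ord0 ord0
  = 2%:R * (newton_iter (t *: delta_mx ord0 ord0) X0 k) ord0 ord0
    - (newton_iter (t *: delta_mx ord0 ord0) X0 k) ord0 ord0 * t
      * (newton_iter (t *: delta_mx ord0 ord0) X0 k) ord0 ord0.
Proof.
rewrite /=; set X := newton_iter _ _ k; set Y := X *m _ *m X.
by rewrite -XAX00 !mxE.
Qed.


Lemma cconj_nat (b : bool) : cconj (b%:R : C) = b%:R.
Proof. by case: b; rewrite /cconj /= ?oppr0. Qed.

Lemma ctrmx_delta p : ctrmx (delta_mx ord0 ord0 : 'M[C]_(p.+1, p.+1)) = delta_mx ord0 ord0.
Proof.
by apply/matrixP => i j; rewrite !mxE cconj_nat andbC.
Qed.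

Lemma realC_mulV {t : R} : t != 0 -> t%:C * (t^-1)%:C = 1.
Proof. by move=> t0; rewrite -rmorphM mulfV // rmorph1. Qed.

Lemma realC_Vmul {t : R} : t != 0 -> (t^-1)%:C * t%:C = 1.
Proof. by move=> t0; rewrite mulrC realC_mulV. Qed.

Lemma pinv_entry p q (t : R) : t != 0 ->
  (pinv (t%:C *: (delta_mx ord0 ord0 : 'M[C]_(p.+1, q.+1)))) ord0 ord0 = (t^-1)%:C.
Proof.
move=> t0; set A := t%:C *: _.
have ex : exists X, is_MP_pinv A X.
  exists ((t^-1)%:C *: (delta_mx ord0 ord0 : 'M[C]_(q.+1, p.+1))).
  have AX : A *m ((t^-1)%:C *: (delta_mx ord0 ord0 : 'M_(q.+1, p.+1)))
      = (delta_mx ord0 ord0 : 'M_(p.+1, p.+1)).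
    by rewrite /A -scalemxAl -scalemxAr mul_delta_mx scalerA realC_mulV // scale1r.
  have XA : ((t^-1)%:C *: (delta_mx ord0 ord0 : 'M_(q.+1, p.+1))) *m A
      = (delta_mx ord0 ord0 : 'M_(q.+1, q.+1)).
    by rewrite /A -scalemxAl -scalemxAr mul_delta_mx scalerA realC_Vmul // scale1r.
  split.
  - by rewrite AX /A -scalemxAr mul_delta_mx.
  - by rewrite XA -scalemxAr mul_delta_mx.
  - by rewrite AX ctrmx_delta.
  - by rewrite XA ctrmx_delta.
have [h1 _ _ _] : is_MP_pinv A (pinv A) := xgetPex 0 ex.
have := congr1 (fun M : 'M[C]_(p.+1, q.+1) => M ord0 ord0) h1 => /=.
rewrite /A AXA00 mxE mxE eqxx mulr1 => h.
have tC0 : t%:C != 0 :> C.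
  by apply: contra t0 => /eqP [] /eqP.
apply: (mulfI tC0); rewrite realC_mulV //.
by apply: (mulIf tC0); rewrite h mul1r.
Qed.


Lemma nc_def (z : C) : nc z = Num.sqrt (complex.Re z ^+ 2 + complex.Im z ^+ 2).
Proof. by case: z. Qed.

Lemma nc_ge0 (z : C) : 0 <= nc z.
Proof. by rewrite nc_def sqrtr_ge0. Qed.

Lemma nc_sq (z : C) : nc z ^+ 2 = complex.Re z ^+ 2 + complex.Im z ^+ 2.
Proof. by rewrite nc_def sqr_sqrtr // addr_ge0 ?sqr_ge0. Qed.

Lemma nc_sum (I : Type) (r : seq I) (F : I -> C) :
  nc (\sum_(i <- r) F i) <= \sum_(i <- r) nc (F i).
Proof.
apply: (big_rec2 (fun a b => nc a <= b)); first by rewrite Normc.normc0.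
move=> i a b _ h; apply: le_trans (le_normcD _ _) _; exact: lerD.
Qed.

Lemma vnorm2E p (v : 'cV[C]_p) : vnorm2 v = Num.sqrt (\sum_i nc (v i 0) ^+ 2).
Proof. by rewrite /vnorm2; congr Num.sqrt; apply: eq_bigr => i _; rewrite nc_sq. Qed.

Lemma le1_sq (x : R) : 0 <= x -> x ^+ 2 <= 1 -> x <= 1.
Proof. move=> h0 h1; rewrite expr2 in h1; nra. Qed.

Lemma specnorm_ge p q (M : 'M[C]_(p.+1, q.+1)) : nc (M ord0 ord0) <= specnorm M.
Proof.
rewrite /specnorm; set S := (X in sup X).
set d := (delta_mx ord0 ord0 : 'cV[C]_(q.+1)).
have e1 : vnorm2 d = 1.
  rewrite vnorm2E (eq_bigr (fun i => if i == ord0 then 1 else 0)) ?sum_if0 ?sqrtr1 //.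
  move=> i _; rewrite mxE eqxx andbT; case: eqP => _.
    by rewrite Normc.normc1 expr1n.
  by rewrite Normc.normc0 expr0n.
have ub : has_ubound S.
  exists (Num.sqrt (\sum_i (\sum_j nc (M i j)) ^+ 2)).
  move=> y [v hv <-]. rewrite vnorm2E ler_wsqrtr // ler_sum // => i _.
  have hv1 : forall j, nc (v j 0) <= 1.
    move=> j; apply: le1_sq; first exact: nc_ge0.
    have hs : \sum_i nc (v i 0) ^+ 2 = 1.
      move: hv => /=; rewrite vnorm2E => hv.
      by rewrite -[LHS]sqr_sqrtr ?hv ?expr1n // sumr_ge0 // => k _; exact: sqr_ge0.
    rewrite -hs (bigD1 j) //= lerDl sumr_ge0 // => k _; exact: sqr_ge0.
  apply: lerXn2r; rewrite ?nnegrE; first exact: nc_ge0.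
    by apply: sumr_ge0 => j _; exact: nc_ge0.
  rewrite mxE; apply: le_trans (nc_sum _ _ _) _; apply: ler_sum => j _.
  rewrite Normc.normcM; apply: ler_piMr; [exact: nc_ge0 | exact: hv1].
have hs : has_sup S by split => //; exists (vnorm2 (M *m d)), d.
have h2 : vnorm2 (M *m d) <= sup S by apply: (sup_upper_bound hs); exists d.
apply: le_trans h2.
rewrite vnorm2E big_ord_recl /= mul_dr eqxx.
have E : nc (M ord0 ord0) = Num.sqrt (nc (M ord0 ord0) ^+ 2).
  by rewrite sqrtr_sqr ger0_norm // nc_ge0.
rewrite [X in X <= _]E ler_wsqrtr //.
by rewrite lerDl sumr_ge0 // => i _; exact: sqr_ge0.
Qed.


Lemma nc_realC (t : R) : 0 <= t -> nc t%:C = t.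
Proof. by move=> t0; rewrite nc_def /= expr0n addr0 sqrtr_sqr ger0_norm. Qed.

Lemma iter_bound (t c : R) (x : nat -> C) k : 0 <= t -> nc (x 0%N) <= c ->
  t * (3%:R ^+ k * c) <= 1 ->
  (forall j, x j.+1 = 2%:R * x j - x j * t%:C * x j) ->
  forall j, (j <= k)%N -> nc (x j) <= 3%:R ^+ j * c.
Proof.
move=> t0 hc htk hx; elim=> [|j IH] hj; first by rewrite expr0 mul1r.
have IHj := IH (ltnW hj).
have a0 := nc_ge0 (x j).
have c0 : 0 <= c by apply: le_trans hc; exact: nc_ge0.
have hB : t * (3%:R ^+ j * c) <= 1.
  apply: le_trans htk; apply: ler_wpM2l => //; apply: ler_wpM2r => //.
  by rewrite ler_eXn2l ?ltr1n // ltnW.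
rewrite hx; apply: le_trans (le_normcD _ _) _.
have n2 : nc (2%:R : C) = 2%:R.
  by rewrite -(rmorph_nat (real_complex R)) nc_realC // ler0n.
rewrite normcN !Normc.normcM nc_realC // n2.
set a := nc (x j) in a0 IHj *; set B := 3%:R ^+ j * c in IHj hB *.
have tB : 0 <= t * B.
  by apply: mulr_ge0 => //; apply: mulr_ge0 => //; apply: exprn_ge0; exact: ler0n.
have h1 : a * t * a <= a.
  rewrite -mulrA; apply: ler_piMr => //.
  apply: le_trans hB; exact: ler_wpM2l.
have -> : 3%:R ^+ j.+1 * c = 3%:R * B by rewrite exprS mulrA.
rewrite -mulrA in h1; lra.
Qed.


Lemma real_rep_ext (x : R) a b s a' b' s' :
  (forall q, a q = a' q) -> (forall q, b q = b' q) -> (forall q, s q = s' q) ->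
  real_rep x a b s -> real_rep x a' b' s'.
Proof.
move=> ea eb es [[pa ha] [pb hb] [ps hs] hb0 happ]; split.
- by exists pa => q; rewrite -ea.
- by exists pb => q; rewrite -eb.
- by exists ps => q; rewrite -es.
- by move=> q; rewrite -eb.
- by move=> q; rewrite -ea -eb -es.
Qed.

Lemma rep_zero : real_rep (0 : R) (fun _ => 0%N) (fun _ => 1%N) (fun _ => 0%N).
Proof.
split; try exact: rec_cst; first by [].
move=> q; rewrite /rat_val /= mulr0 mul0r subr0 normr0.
by rewrite invr_ge0 exprn_ge0 // ler0n.
Qed.

Lemma rep_pow (M : nat) :
  real_rep ((2%:R ^+ M)^-1 : R) (fun q => nat_of_bool (M <= q)%N)
    (fun q => if (M <= q)%N then (2 ^ M)%N else 1%N) (fun _ => 0%N).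
Proof.
split; [exact: rec_ind | exact: rec_b | exact: rec_cst | |].
  by move=> q; case: leqP => // _; apply/eqP; rewrite expn_eq0.
move=> q; rewrite /rat_val expr0 mul1r; case: leqP => hq /=.
  by rewrite mul1r natrX subrr normr0 invr_ge0 exprn_ge0 // ler0n.
rewrite mul0r sub0r normrN ger0_norm ?invr_ge0 ?exprn_ge0 ?ler0n //.
rewrite lef_pV2 ?posrE ?exprn_gt0 ?ltr0n //.
by rewrite ler_eXn2l ?ltr1n // ltnW.
Qed.

Lemma nc_le (z : C) : nc z <= `|complex.Re z| + `|complex.Im z|.
Proof.
rewrite nc_def -[X in _ <= X]ger0_norm ?addr_ge0 // -sqrtr_sqr ler_wsqrtr //.
have ha := normr_ge0 (complex.Re z); have hb := normr_ge0 (complex.Im z).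
rewrite -(real_normK (num_real (complex.Re z))) -(real_normK (num_real (complex.Im z))) !expr2; nra.
Qed.

End Mx.

Lemma idx_lt {m n} (i : 'I_m) (j : 'I_n) :
  (re_idx n i j < 2 * (m * n))%N /\ (im_idx n i j < 2 * (m * n))%N.
Proof.
have hi := ltn_ord i; have hj := ltn_ord j; rewrite /re_idx /im_idx.
split; nia.
Qed.

Theorem corollary3p5 (R : realType) (m n : nat) (hm : (2 <= m)%N) (hn : (2 <= n)%N) :
  ~ exists G : 'M[R[i]]_(m, n) -> 'M[R[i]]_(n, m),
      BT_computable G /\
      exists e : nat -> nat, recursive e /\
        forall A : 'M[R[i]]_(m, n), computable_mx A ->
        forall N k : nat, (e N <= k)%N ->
          specnorm (pinv A - newton_iter A (G A) k) <= 2%:R ^- N.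
Proof.
case: m hm => // m _; case: n hn => // n _.
move=> [G [[P HP] [e [_ He]]]].
set k := e 1%N.
pose rho0 : nat -> nat -> nat -> nat := fun T c q =>
  if (T < 2 * (m.+1 * n.+1))%N then nat_of_bool (c == 1%N) else 0%N.
have rho0_slot : forall T, (T < 2 * (m.+1 * n.+1))%N ->
    real_rep (0 : R) (rho0 T 0%N) (rho0 T 1%N) (rho0 T 2%N).
  move=> T hT; eapply real_rep_ext; last exact: rep_zero; by move=> q; rewrite /rho0 hT.
have rho0_out : forall T c q, ((2 * (m.+1 * n.+1) <= T)%N \/ (3 <= c)%N) -> rho0 T c q = 0%N.
  move=> T c q [h|h]; rewrite /rho0; first by rewrite ltnNge h.
  by case: ifP => // _; case: eqP => // E; rewrite E in h.
have rep0 : mx_rep (0 : 'M[R[i]]_(m.+1, n.+1)) rho0.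
  split; last exact: rho0_out.
    by move=> i j; rewrite mxE; have [h1 h2] := idx_lt i j; exact: (rho0_slot _ h1).
  by move=> i j; rewrite mxE; have [h1 h2] := idx_lt i j; exact: (rho0_slot _ h2).
have [sigma0 [Hev0 _]] := HP _ _ rep0.
have [K HK] : exists K, forall T, (T < 2)%N -> forall c, (c < 3)%N ->
    forall o', agree rho0 o' K -> eval o' P [:: T; c; 0%N] (sigma0 T c 0%N).
  apply: fin_max.
    by move=> T K1 K2 le H c hc o' Ha; apply: H => //; exact: agree_mono Ha.
  move=> T _; apply: fin_max.
    by move=> c K1 K2 le H o' Ha; apply: H; exact: agree_mono Ha.
  move=> c _; exact: eval_local (Hev0 T c 0%N).
pose rv T : R := rat_val (sigma0 T 0%N 0%N) (sigma0 T 1%N 0%N) (sigma0 T 2%N 0%N).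
pose Cb : R := (`|rv 0%N| + 1) + (`|rv 1%N| + 1).
have Cb0 : 0 <= Cb by rewrite /Cb addr_ge0 // addr_ge0.
pose X : R := 3%:R ^+ k * Cb + 1.
have X0 : 0 <= X by rewrite /X addr_ge0 // mulr_ge0 // exprn_ge0 // ler0n.
pose M := (K + Num.bound X)%N.
have hM : X <= 2%:R ^+ M.
  apply: ltW; apply: lt_le_trans (archi_boundP X0) _.
  rewrite -natrX ler_nat; apply: leq_trans (ltnW (ltn_expl M (ltnSn 1))).
  exact: leq_addl.
pose t : R := (2%:R ^+ M)^-1.
have t0 : t != 0 by rewrite invr_eq0 expf_eq0 pnatr_eq0 andbF.
have tge0 : 0 <= t by rewrite invr_ge0 exprn_ge0 // ler0n.
pose A1 : 'M[R[i]]_(m.+1, n.+1) := t%:C *: delta_mx ord0 ord0.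
have A1E : forall i j, A1 i j = if (i == ord0) && (j == ord0) then t%:C else 0.
  by move=> i j; rewrite !mxE; case: ifP => _; rewrite ?mulr1 ?mulr0.
pose rho1 : nat -> nat -> nat -> nat := fun T c q =>
  if (T == 0%N) && (M <= q)%N then
    (if c == 0%N then 1%N else if c == 1%N then (2 ^ M)%N else 0%N)
  else rho0 T c q.
have rho1_ne : forall T c q, T != 0%N -> rho1 T c q = rho0 T c q.
  by move=> T c q /negPf hT; rewrite /rho1 hT.
have pos : (0 < 2 * (m.+1 * n.+1))%N by rewrite !muln_gt0.
have rep1 : mx_rep A1 rho1.
  split.
  - move=> i j; rewrite A1E; case: ifP => [/andP [/eqP -> /eqP ->] | hij].
      have -> : re_idx n.+1 (@ord0 m) (@ord0 n) = 0%N by rewrite /re_idx mul0n.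
      eapply real_rep_ext; last exact: (@rep_pow R M).
      + by move=> q; rewrite /rho1 /=; case: leqP => // _; rewrite /rho0 pos.
      + by move=> q; rewrite /rho1 /=; case: leqP => // _; rewrite /rho0 pos.
      + by move=> q; rewrite /rho1 /=; case: leqP => // _; rewrite /rho0 pos.
    have hT : re_idx n.+1 i j != 0%N.
      apply: contraFN hij; rewrite /re_idx => /eqP h; apply/andP; split; apply/eqP/val_inj => /=; nia.
    have [h1 _] := idx_lt i j.
    eapply real_rep_ext; last exact: (rho0_slot _ h1); by move=> q; rewrite rho1_ne.
  - move=> i j; have hT : im_idx n.+1 i j != 0%N by [].
    have [_ h2] := idx_lt i j.
    have -> : complex.Im (A1 i j) = 0 by rewrite A1E; case: ifP.
    eapply real_rep_ext; last exact: (rho0_slot _ h2); by move=> q; rewrite rho1_ne.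
  - move=> T c q h; rewrite /rho1; case: ifP => [/andP [/eqP E _] | _]; last exact: rho0_out.
    case: h => h; first by rewrite E leqNgt pos in h.
    by case: eqP h => [-> //|_]; case: eqP => [-> //|].
have ag : agree rho0 rho1 K.
  move=> T c q _ _ hq; rewrite /rho1.
  have -> : (M <= q)%N = false by apply/negbTE; rewrite -ltnNge; apply: leq_trans hq (leq_addr _ _).
  by rewrite andbF.
have [sigma1 [Hev1 rep_s1]] := HP _ _ rep1.
have same : forall T c, (T < 2)%N -> (c < 3)%N -> sigma1 T c 0%N = sigma0 T c 0%N.
  move=> T c hT hc; exact: (@eval_det _ _ _ _ (Hev1 T c 0%N) _ (HK T hT c hc rho1 ag)).
pose g1 := G A1 ord0 ord0.
have [hRe hIm _] := rep_s1.
have [_ _ _ _ aRe] := hRe ord0 ord0.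
have [_ _ _ _ aIm] := hIm ord0 ord0.
have bRe := aRe 0%N; have bIm := aIm 0%N.
rewrite /re_idx /= mul0n addn0 muln0 !same // expr0 invr1 -/(rv 0%N) in bRe.
rewrite /im_idx /= mul0n addn0 muln0 !same // expr0 invr1 -/(rv 1%N) in bIm.
have nRe : `|complex.Re g1| <= `|rv 0%N| + 1.
  have := ler_normD (complex.Re g1 - rv 0%N) (rv 0%N); rewrite subrK distrC => h.
  by apply: le_trans h _; rewrite addrC lerD2l.
have nIm : `|complex.Im g1| <= `|rv 1%N| + 1.
  have := ler_normD (complex.Im g1 - rv 1%N) (rv 1%N); rewrite subrK distrC => h.
  by apply: le_trans h _; rewrite addrC lerD2l.
have ng1 : Normc.normc g1 <= Cb.
  apply: le_trans (@nc_le R g1) _; rewrite /Cb; lra.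
pose x j := newton_iter A1 (G A1) j ord0 ord0.
have hx : forall j, x j.+1 = 2%:R * x j - x j * t%:C * x j.
  by move=> j; rewrite /x /A1 newton_entry.
have htk : t * (3%:R ^+ k * Cb) <= 1.
  rewrite /t mulrC ler_pdivrMr ?exprn_gt0 ?ltr0n // mul1r.
  move: hM; rewrite /X; lra.
have hxk := @iter_bound R t Cb x k tge0 ng1 htk hx k (leqnn k).
have hs := He A1 (ex_intro _ rho1 rep1) 1%N k (leqnn _).
have hge := @specnorm_ge R n m (pinv A1 - newton_iter A1 (G A1) k).
rewrite mxE (@pinv_entry R m n t t0) mxE -/(x k) in hge.
have tri := le_normcD ((t^-1)%:C - x k) (x k); rewrite subrK in tri.
have tinv : t^-1 = 2%:R ^+ M by rewrite /t invrK.
rewrite tinv in tri hge.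
rewrite nc_realC in tri; last by rewrite exprn_ge0 // ler0n.
rewrite expr1 in hs.
move: hM; rewrite /X => hM'.
lra.
Qed.
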